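(* Let $\lambda,\mu,\nu>0$ and equip $S^3$ with the generalised Lorentzian Berger metric $h$ described in the context, with $h$-orthonormal left-invariant frame $X,Y,Z$. Then $$K(X,Y)=h(R(X,Y)Y,X)=\frac{(\lambda^2+\mu^2-\nu^2)^2+4\nu^2(\mu^2-\nu^2)}{(\lambda\mu\nu)^2},$$ $$K(X,Z)=h(R(X,Z)Z,X)=\frac{(\lambda^2-\mu^2+\nu^2)^2-4\mu^2(\mu^2-\nu^2)}{(\lambda\mu\nu)^2},$$ $$K(Y,Z)=h(R(Y,Z)Z,Y)=\frac{(\lambda^2+\mu^2+\nu^2)^2+2(\lambda^4-\mu^4-\nu^4)}{(\lambda\mu\nu)^2}.$$
   Context: $S^3=\{(z,w)\in\mathbb C^2: |z|^2+|w|^2=1\}$ is a Lie group with multiplication $(z_1,w_1)\cdot(z_2,w_2)=(z_1z_2-\bar w_1w_2,\ \bar z_1w_2+w_1z_2)$ and inverse $(z,w)^{-1}=(\bar z,-w)$; the same formula defines $p\cdot v$ for $v\in\mathbb C^2$. Let $\langle (z_1,w_1),(z_2,w_2)\rangle=\mathrm{Re}(z_1\bar z_2+w_1\bar w_2)$. The Lorentzian metric is $h_p(A,B)=-\lambda^2\langle p^{-1}A,(i,0)\rangle\langle p^{-1}B,(i,0)\rangle+\mu^2\langle p^{-1}A,(0,-1)\rangle\langle p^{-1}B,(0,-1)\rangle+\nu^2\langle p^{-1}A,(0,i)\rangle\langle p^{-1}B,(0,i)\rangle+\langle p^{-1}A,(1,0)\rangle\langle p^{-1}B,(1,0)\rangle$.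 The frame is $X_p=\lambda^{-1}p\cdot(i,0)$, $Y_p=\mu^{-1}p\cdot(0,-1)$, $Z_p=\nu^{-1}p\cdot(0,i)$, with $h(X,X)=-1$, $h(Y,Y)=h(Z,Z)=1$. $R(A,B)C=\nabla_A\nabla_BC-\nabla_B\nabla_AC-\nabla_{[A,B]}C$ for the Levi-Civita connection $\nabla$ of $h$; the paper denotes the quantities $h(R(A,B)B,A)$ for frame vectors by $K(A,B)$. *)

(* Defs.v *)
From HB Require Import structures.
From mathcomp Require Import all_boot all_order all_algebra.
From mathcomp Require Import all_classical all_reals all_analysis.
Set Implicit Arguments. Unset Strict Implicit. Unset Printing Implicit Defensive.
Import Order.TTheory GRing.Theory Num.Theory.
Import numFieldNormedType.Exports.
Local Open Scope ring_scope.

(* C^2 is identified with R^4 = 'rV[R]_4 via (z, w) = (a + i b, c + i d)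
   |-> (a, b, c, d). *)
Section Berger.
Variable R : realType.
Notation V := 'rV[R]_4.

Definition mk4 (a b c d : R) : V := \row_(i < 4) nth 0 [:: a; b; c; d] i.
Definition cd (p : V) (k : nat) : R := p ord0 (inord k).

(* (z1,w1).(z2,w2) = (z1 z2 - conj(w1) w2, conj(z1) w2 + w1 z2) *)
Definition qmul (p q : V) : V :=
  let a1 := cd p 0 in let b1 := cd p 1 in let c1 := cd p 2 in let d1 := cd p 3 in
  let a2 := cd q 0 in let b2 := cd q 1 in let c2 := cd q 2 in let d2 := cd q 3 in
  mk4 (a1 * a2 - b1 * b2 - (c1 * c2 + d1 * d2))
      (a1 * b2 + b1 * a2 - (c1 * d2 - d1 * c2))
      ((a1 * c2 + b1 * d2) + (c1 * a2 - d1 * b2))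
      ((a1 * d2 - b1 * c2) + (c1 * b2 + d1 * a2)).

(* (z,w)^{-1} = (conj z, - w) *)
Definition qinv (p : V) : V := mk4 (cd p 0) (- cd p 1) (- cd p 2) (- cd p 3).

Definition dot (u v : V) : R :=
  cd u 0 * cd v 0 + cd u 1 * cd v 1 + cd u 2 * cd v 2 + cd u 3 * cd v 3.

Definition S3 (p : V) : Prop := dot p p = 1.

Definition e_i0 : V := mk4 0 1 0 0.
Definition e_0m1 : V := mk4 0 0 (-1) 0.
Definition e_0i : V := mk4 0 0 0 1.
Definition e_10 : V := mk4 1 0 0 0.

Definition hB (lam mu nu : R) (p A B : V) : R :=
  let a := qmul (qinv p) A in let b := qmul (qinv p) B in
  - lam ^+ 2 * dot a e_i0 * dot b e_i0
  + mu ^+ 2 * dot a e_0m1 * dot b e_0m1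
  + nu ^+ 2 * dot a e_0i * dot b e_0i
  + dot a e_10 * dot b e_10.

(* vector fields (given by ambient extensions to C^2 = R^4) *)
Definition VF := V -> V.

Definition Xf (lam : R) : VF := fun p => lam^-1 *: qmul p e_i0.
Definition Yf (mu : R) : VF := fun p => mu^-1 *: qmul p e_0m1.
Definition Zf (nu : R) : VF := fun p => nu^-1 *: qmul p e_0i.

Fixpoint Ck {W : normedModType R} (k : nat) (f : V -> W) : Prop :=
  match k with
  | 0 => True
  | k'.+1 => (forall x, differentiable f x) /\
             (forall v : V, Ck k' (fun x => derive f x v))
  end.
Definition smooth {W : normedModType R} (f : V -> W) : Prop := forall k, Ck k f.

(* smooth vector fields on S^3 (represented by smooth ambient extensions
   that are tangent to S^3 along S^3) *)
Definition tangentVF (A : VF) : Prop := forall p, S3 p -> dot (A p) p = 0.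
Definition admissible (A : VF) : Prop := smooth A /\ tangentVF A.

(* Lie bracket [A,B] (ambient formula, restricted to S^3) *)
Definition bracket (A B : VF) : VF :=
  fun p => derive B p (A p) - derive A p (B p).

(* Levi-Civita connection of the metric g on S^3: an affine connection on the
   smooth tangent vector fields of S^3 (values only matter on S^3), which is
   torsion free and compatible with g. *)
Definition is_LeviCivita (g : V -> V -> V -> R) (nab : VF -> VF -> VF) : Prop :=
  (forall A B, admissible A -> admissible B -> admissible (nab A B)) /\
  (forall A A' B B' p, admissible A -> admissible A' -> admissible B ->
     admissible B' -> S3 p -> A p = A' p -> (forall q, S3 q -> B q = B' q) ->
     nab A B p = nab A' B' p) /\
  (forall A A' B p, admissible A -> admissible A' -> admissible B -> S3 p ->
     nab (fun q => A q + A' q) B p = nab A B p + nab A' B p) /\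
  (forall (f : V -> R) A B p, smooth f -> admissible A -> admissible B -> S3 p ->
     nab (fun q => f q *: A q) B p = f p *: nab A B p) /\
  (forall A B B' p, admissible A -> admissible B -> admissible B' -> S3 p ->
     nab A (fun q => B q + B' q) p = nab A B p + nab A B' p) /\
  (forall (f : V -> R) A B p, smooth f -> admissible A -> admissible B -> S3 p ->
     nab A (fun q => f q *: B q) p = derive f p (A p) *: B p + f p *: nab A B p) /\
  (forall A B p, admissible A -> admissible B -> S3 p ->
     nab A B p - nab B A p = bracket A B p) /\
  (forall A B C p, admissible A -> admissible B -> admissible C -> S3 p ->
     derive (fun q => g q (B q) (C q)) p (A p)
       = g p (nab A B p) (C p) + g p (B p) (nab A C p)).

Definition curv (nab : VF -> VF -> VF) (A B C : VF) : VF :=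
  fun p => nab A (nab B C) p - nab B (nab A C) p - nab (bracket A B) C p.

End Berger.

(* Main.v *)
Require Import Defs.
From HB Require Import structures.
From mathcomp Require Import all_boot all_order all_algebra.
From mathcomp Require Import all_classical all_reals all_analysis.
From mathcomp Require Import ring lra.
Import Order.TTheory GRing.Theory Num.Theory.
Import numFieldNormedType.Exports.
Local Open Scope ring_scope.

Section A.
Variable R : realType.
Notation V := 'rV[R]_4.

Lemma cd_mk40 (a b c d : R) : cd (mk4 a b c d) 0 = a.
Proof. by rewrite /cd /mk4 !mxE !inordK. Qed.
Lemma cd_mk41 (a b c d : R) : cd (mk4 a b c d) 1 = b.
Proof. by rewrite /cd /mk4 !mxE !inordK. Qed.
Lemma cd_mk42 (a b c d : R) : cd (mk4 a b c d) 2 = c.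
Proof. by rewrite /cd /mk4 !mxE !inordK. Qed.
Lemma cd_mk43 (a b c d : R) : cd (mk4 a b c d) 3 = d.
Proof. by rewrite /cd /mk4 !mxE !inordK. Qed.
Lemma cdD (u v : V) k : cd (u + v) k = cd u k + cd v k.
Proof. by rewrite /cd mxE. Qed.
Lemma cdN (u : V) k : cd (- u) k = - cd u k.
Proof. by rewrite /cd mxE. Qed.
Lemma cdZ (a : R) (u : V) k : cd (a *: u) k = a * cd u k.
Proof. by rewrite /cd mxE. Qed.
Definition cdE := (cd_mk40, cd_mk41, cd_mk42, cd_mk43, cdD, cdN, cdZ).

Lemma V_ext (u v : V) : cd u 0 = cd v 0 -> cd u 1 = cd v 1 -> cd u 2 = cd v 2 ->
  cd u 3 = cd v 3 -> u = v.
Proof.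
move=> h0 h1 h2 h3; apply/rowP => i.
have E k (Hk : (k < 4)%N) : inord k = Ordinal Hk :> 'I_4 by apply/val_inj; rewrite /= inordK.
rewrite /cd in h0 h1 h2 h3.
case: i => [[|[|[|[|//]]]] Hi].
- by rewrite -E.
- by rewrite -E.
- by rewrite -E.
- by rewrite -E.
Qed.

Lemma lin_cont (W : normedModType R) (f : V -> W) (Hf : linear f) (x : V) : {for x, continuous f}.
Proof.
have f0 : f 0 = 0.
  have h := Hf 1 0 0; rewrite !scale1r addr0 in h.
  by apply/(addrI (f 0)); rewrite addr0 -h.
have fD u v : f (u + v) = f u + f v by have := Hf 1 u v; rewrite !scale1r.
have fZ a u : f (a *: u) = a *: f u by have := Hf a u 0; rewrite !addr0 f0 addr0.
have -> : f = fun q => q ord0 0 *: f (delta_mx 0 0) + q ord0 1 *: f (delta_mx 0 1)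
   + q ord0 2 *: f (delta_mx 0 2) + q ord0 3 *: f (delta_mx 0 3).
  apply: funext => q; rewrite {1}(row_sum_delta q).
  rewrite !big_ord_recr big_ord0 /= add0r !fD !fZ.
  by congr (_ + _ + _ + _); congr (q _ _ *: f (delta_mx _ _)); apply/val_inj.
have c i : {for x, continuous (fun q : V => q ord0 i *: f (delta_mx 0 i))}.
  apply: continuousZr_tmp; exact: coord_continuous.
by do 3! apply: continuousD => //.
Qed.

Lemma derive_lin (W : normedModType R) (f : V -> W) (Hf : linear f) x v :
  differentiable f x /\ 'D_v f x = f v.
Proof.
pose fM := GRing.isLinear.Build _ _ _ _ _ Hf.
pose F : {linear V -> W} := HB.pack f fM.
have cF : continuous F by move=> y; exact: lin_cont.
have dF : differentiable f x by exact: (linear_differentiable x cF).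
have H : 'd f x = f :> (V -> W) := diff_lin x cF.
by split => //; rewrite deriveE // H.
Qed.
Arguments derive_lin {W f} Hf x v.

Lemma Ck_cst (W : normedModType R) k (c : W) : Ck k (fun _ : V => c).
Proof.
elim: k c => [//|k IH] c /=; split => [x|v]; first exact: differentiable_cst.
have -> : (fun x : V => 'D_v (fun _ : V => c) x) = (fun _ => 0).
  by apply: funext => x; exact: (derive_cst c).
exact: IH.
Qed.

Lemma smooth_lin (W : normedModType R) (f : V -> W) : linear f -> smooth f.
Proof.
move=> Hf k; case: k => [//|k] /=; split => [x|v]; first by case: (derive_lin Hf x 0).
have -> : (fun x : V => 'D_v f x) = (fun _ => f v).
  by apply: funext => x; case: (derive_lin Hf x v).
exact: Ck_cst.
Qed.

Definition crd (k : nat) (q : V) : R := cd q k.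
Definition L (a : V) : VF R := fun q => qmul q a.

Lemma L_lin a : linear (L a).
Proof.
move=> k u v; apply: V_ext; rewrite /L /qmul !cdE; ring.
Qed.

Definition im (a : V) := cd a 0 = 0.

Lemma L_adm a : im a -> admissible (L a).
Proof.
move=> ha; split; first exact: smooth_lin (L_lin a).
move=> p _; rewrite /dot /L /qmul !cdE; rewrite ha; ring.
Qed.
Arguments L_adm {a}.

Definition comm (a b : V) := qmul a b - qmul b a.

Lemma bracket_L a b : bracket (L a) (L b) = L (comm a b).
Proof.
apply: funext => p; rewrite /bracket.
rewrite (derive_lin (L_lin b) p (L a p)).2 (derive_lin (L_lin a) p (L b p)).2.
apply: V_ext; rewrite /L /comm /qmul !cdE; ring.
Qed.


Lemma crd_lin k : linear (crd k).
Proof. by move=> a u v; rewrite /crd cdD cdZ. Qed.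

Lemma is_derive_crd k x v : is_derive x v (crd k) (crd k v).
Proof.
have [d e] := derive_lin (crd_lin k) x v.
by apply: DeriveDef => //; exact: diff_derivable.
Qed.
Existing Instance is_derive_crd.

Lemma scR (a b : R) : a *: b = a * b. Proof. by []. Qed.

Section Met.
Variables lam mu nu : R.
Definition Gf (x y : V) : R :=
  - lam ^+ 2 * cd x 1 * cd y 1 + mu ^+ 2 * cd x 2 * cd y 2 + nu ^+ 2 * cd x 3 * cd y 3
  + cd x 0 * cd y 0.

Lemma qinv_qmul (p x : V) : qmul (qinv p) (qmul p x) = dot p p *: x.
Proof. apply: V_ext; rewrite /qinv /qmul /dot !cdE; ring. Qed.

Lemma hB_L (p b c : V) : hB lam mu nu p (L b p) (L c p) = (dot p p) ^+ 2 * Gf b c.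
Proof.
rewrite /hB /L !qinv_qmul /Gf /dot /e_i0 /e_0m1 /e_0i /e_10 !cdE; ring.
Qed.

Lemma hB_Lr (p w c : V) : hB lam mu nu p w (L c p) = dot p p * Gf (qmul (qinv p) w) c.
Proof.
rewrite /hB /L !qinv_qmul /Gf /dot /e_i0 /e_0m1 /e_0i /e_10 !cdE; ring.
Qed.

Lemma der_hBL (b c p v : V) : dot p v = 0 ->
  'D_v (fun q => hB lam mu nu q (L b q) (L c q)) p = 0.
Proof.
move=> hv.
pose ph : V -> R := (crd 0 * crd 0 + crd 1 * crd 1 + crd 2 * crd 2 + crd 3 * crd 3)%R.
have -> : (fun q => hB lam mu nu q (L b q) (L c q)) = Gf b c *: (ph * ph)%R.
  apply: funext => q;   by rewrite hB_L /ph !fctE /crd /dot !scR expr2 mulrC.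
have Hc k : is_derive p v (crd k) (crd k v) := is_derive_crd k p v.
have H1 := is_deriveM (Hc 0%N) (Hc 0%N).
have H2 := is_deriveM (Hc 1%N) (Hc 1%N).
have H3 := is_deriveM (Hc 2%N) (Hc 2%N).
have H4 := is_deriveM (Hc 3%N) (Hc 3%N).
have Hph := is_deriveD (is_deriveD (is_deriveD H1 H2) H3) H4.
have H := is_deriveZ (Gf b c) (is_deriveM Hph Hph).
case: H => _ ->.
apply: (@eq_trans _ _ (4 * Gf b c * (dot p p) * dot p v)); last by rewrite hv mulr0.
rewrite !fctE /crd /dot !scR; ring.
Qed.

Lemma hB_Ll (p c w : V) : hB lam mu nu p (L c p) w = dot p p * Gf c (qmul (qinv p) w).
Proof.
rewrite /hB /L !qinv_qmul /Gf /dot /e_i0 /e_0m1 /e_0i /e_10 !cdE; ring.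
Qed.
Lemma Gf_sym (x y : V) : Gf x y = Gf y x.
Proof. rewrite /Gf; ring. Qed.
Lemma Gf_subl (x y z : V) : Gf (x - y) z = Gf x z - Gf y z.
Proof. rewrite /Gf !cdE; ring. Qed.
End Met.

Lemma qinv_sub (p x y : V) : qmul (qinv p) (x - y) = qmul (qinv p) x - qmul (qinv p) y.
Proof. apply: V_ext; rewrite /qinv /qmul !cdE; ring. Qed.
Lemma qmul_qinv (p x : V) : qmul p (qmul (qinv p) x) = dot p p *: x.
Proof. apply: V_ext; rewrite /qinv /qmul /dot !cdE; ring. Qed.
Lemma dotL (p a : V) : dot p (L a p) = dot p p * cd a 0.
Proof. rewrite /dot /L /qmul !cdE; ring. Qed.

Definition w_ (nab : VF R -> VF R -> VF R) (p a b : V) := qmul (qinv p) (nab (L a) (L b) p).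

Lemma K1 lam mu nu nab (p a b c : V) : is_LeviCivita (hB lam mu nu) nab -> S3 p ->
  im a -> im b -> im c ->
  Gf lam mu nu (w_ nab p a b) c + Gf lam mu nu (w_ nab p a c) b = 0.
Proof.
case=> Hadm [_ [_ [_ [_ [_ [_ Hcomp]]]]]] Hp ha hb hc.
have := Hcomp (L a) (L b) (L c) p (L_adm ha) (L_adm hb) (L_adm hc) Hp.
rewrite der_hBL; last by rewrite dotL ha mulr0.
rewrite hB_Lr hB_Ll /S3 in Hp *; rewrite Hp !mul1r (Gf_sym _ _ _ b) => <-.
by [].
Qed.

Arguments K1 {lam mu nu nab p a b c}.
Lemma K2 lam mu nu nab (p a b c : V) : is_LeviCivita (hB lam mu nu) nab -> S3 p ->
  im a -> im b ->
  Gf lam mu nu (w_ nab p a b) c - Gf lam mu nu (w_ nab p b a) c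
   = Gf lam mu nu (comm a b) c.
Proof.
case=> Hadm [_ [_ [_ [_ [_ [Htor _]]]]]] Hp ha hb.
have := Htor (L a) (L b) p (L_adm ha) (L_adm hb) Hp.
rewrite bracket_L => E.
rewrite -Gf_subl /w_ -qinv_sub E /L qinv_qmul.
by move: Hp; rewrite /S3 => ->; rewrite scale1r.
Qed.

Arguments K2 {lam mu nu nab p a b} c.
Lemma K3 lam mu nu nab (p a b : V) : is_LeviCivita (hB lam mu nu) nab -> S3 p ->
  im a -> im b -> im (w_ nab p a b).
Proof.
case=> Hadm _ Hp ha hb.
have [_ Ht] := Hadm _ _ (L_adm ha) (L_adm hb).
rewrite /im /w_ /qinv /qmul !cdE; have := Ht p Hp; rewrite /dot => <-; ring.
Qed.

Arguments K3 {lam mu nu nab p a b}.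
Definition Kf lam mu nu (a b c : V) :=
  (Gf lam mu nu (comm a b) c + Gf lam mu nu (comm c b) a - Gf lam mu nu (comm a c) b) / 2.

Lemma Kos lam mu nu nab (p a b c : V) : is_LeviCivita (hB lam mu nu) nab -> S3 p ->
  im a -> im b -> im c ->
  Gf lam mu nu (w_ nab p a b) c = Kf lam mu nu a b c.
Proof.
move=> H Hp ha hb hc.
have e1 := K1 H Hp ha hb hc.
have e2 := K2 b H Hp ha hc.
have e3 := K1 H Hp hc ha hb.
have e4 := K2 a H Hp hc hb.
have e5 := K1 H Hp hb hc ha.
have e6 := K2 c H Hp ha hb.
rewrite /Kf; lra.
Qed.

Arguments Kos {lam mu nu nab p a b c}.
Definition E1 : V := mk4 0 1 0 0.
Definition E2 : V := mk4 0 0 1 0.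
Definition E3 : V := mk4 0 0 0 1.

Definition Gam lam mu nu (a b : V) : V :=
  mk4 0 (- Kf lam mu nu a b E1 / lam ^+ 2) (Kf lam mu nu a b E2 / mu ^+ 2)
        (Kf lam mu nu a b E3 / nu ^+ 2).

Lemma nab_L lam mu nu nab (p a b : V) : lam != 0 -> mu != 0 -> nu != 0 ->
  is_LeviCivita (hB lam mu nu) nab -> S3 p -> im a -> im b ->
  nab (L a) (L b) p = L (Gam lam mu nu a b) p.
Proof.
move=> hl hm hn H Hp ha hb.
have e : nab (L a) (L b) p = qmul p (w_ nab p a b).
  by rewrite /w_ qmul_qinv; move: (Hp); rewrite /S3 => ->; rewrite scale1r.
have i1 : im E1 by rewrite /im /E1 cdE.
have i2 : im E2 by rewrite /im /E2 cdE.
have i3 : im E3 by rewrite /im /E3 cdE.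
have k1 := Kos H Hp ha hb i1.
have k2 := Kos H Hp ha hb i2.
have k3 := Kos H Hp ha hb i3.
have k0 := K3 H Hp ha hb.
rewrite e /L; congr qmul; move: (w_ nab p a b) k0 k1 k2 k3 => w k0 k1 k2 k3.
rewrite /Gf !cdE in k1 k2 k3.
apply: V_ext; rewrite /Gam !cdE.
- exact: k0.
- by rewrite -k1; field.
- by rewrite -k2; field.
- by rewrite -k3; field.
Qed.

Arguments nab_L {lam mu nu nab p a b}.
Lemma im_Gam lam mu nu (x y : V) : im (Gam lam mu nu x y).
Proof. by rewrite /im /Gam cdE. Qed.
Lemma im_comm (x y : V) : im (comm x y).
Proof. rewrite /im /comm /qmul !cdE; ring. Qed.

Lemma curv_L lam mu nu nab (p a b : V) : lam != 0 -> mu != 0 -> nu != 0 ->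
  is_LeviCivita (hB lam mu nu) nab -> S3 p -> im a -> im b ->
  curv nab (L a) (L b) (L b) p =
  L (Gam lam mu nu a (Gam lam mu nu b b) - Gam lam mu nu b (Gam lam mu nu a b)
     - Gam lam mu nu (comm a b) b) p.
Proof.
move=> hl hm hn H Hp ha hb.
have [Hadm [Hloc _]] := H.
rewrite /curv.
have -> : nab (L a) (nab (L b) (L b)) p = nab (L a) (L (Gam lam mu nu b b)) p.
  apply: Hloc => //.
  - exact: L_adm ha.
  - exact: L_adm ha.
  - exact: Hadm _ _ (L_adm hb) (L_adm hb).
  - exact: L_adm (im_Gam _ _ _ _ _).
  - by move=> q Hq; apply: nab_L.
have -> : nab (L b) (nab (L a) (L b)) p = nab (L b) (L (Gam lam mu nu a b)) p.
  apply: Hloc => //.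
  - exact: L_adm hb.
  - exact: L_adm hb.
  - exact: Hadm _ _ (L_adm ha) (L_adm hb).
  - exact: L_adm (im_Gam _ _ _ _ _).
  - by move=> q Hq; apply: nab_L.
rewrite bracket_L.
rewrite (nab_L hl hm hn H Hp ha (im_Gam _ _ _ _ _)).
rewrite (nab_L hl hm hn H Hp hb (im_Gam _ _ _ _ _)).
rewrite (nab_L hl hm hn H Hp (im_comm a b) hb).
apply: V_ext; rewrite /L /qmul !cdE; ring.
Qed.

Arguments curv_L {lam mu nu nab p a b}.
Lemma Xf_L (lam : R) : Xf lam = L (lam^-1 *: (e_i0 R)).
Proof. apply: funext => q; apply: V_ext; rewrite /Xf /L /qmul /e_i0 !cdE; ring. Qed.
Lemma Yf_L (mu : R) : Yf mu = L (mu^-1 *: (e_0m1 R)).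
Proof. apply: funext => q; apply: V_ext; rewrite /Yf /L /qmul /e_0m1 !cdE; ring. Qed.
Lemma Zf_L (nu : R) : Zf nu = L (nu^-1 *: (e_0i R)).
Proof. apply: funext => q; apply: V_ext; rewrite /Zf /L /qmul /e_0i !cdE; ring. Qed.

Definition Gam2 (lam mu nu : R) (a b : V) : V :=
  let a1 := cd a 1 in let a2 := cd a 2 in let a3 := cd a 3 in
  let b1 := cd b 1 in let b2 := cd b 2 in let b3 := cd b 3 in
  mk4 0 (- (a2 * b3 - a3 * b2) + (nu ^+ 2 - mu ^+ 2) * (a2 * b3 + a3 * b2) / lam ^+ 2)
        (- (a3 * b1 - a1 * b3) + (lam ^+ 2 + nu ^+ 2) * (a1 * b3 + a3 * b1) / mu ^+ 2)
        (- (a1 * b2 - a2 * b1) - (lam ^+ 2 + mu ^+ 2) * (a1 * b2 + a2 * b1) / nu ^+ 2).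

Lemma Gam_Gam2 (lam mu nu : R) (a b : V) : lam != 0 -> mu != 0 -> nu != 0 ->
  im a -> im b -> Gam lam mu nu a b = Gam2 lam mu nu a b.
Proof.
move=> hl hm hn ha hb; apply: V_ext;
 rewrite /Gam /Gam2 /Kf /Gf /comm /qmul /E1 /E2 /E3 !cdE ?ha ?hb //; by field.
Qed.

Lemma curv_L2 lam mu nu nab (p a b : V) : lam != 0 -> mu != 0 -> nu != 0 ->
  is_LeviCivita (hB lam mu nu) nab -> S3 p -> im a -> im b ->
  hB lam mu nu p (curv nab (L a) (L b) (L b) p) (L a p) =
  Gf lam mu nu (Gam2 lam mu nu a (Gam2 lam mu nu b b) - Gam2 lam mu nu b (Gam2 lam mu nu a b)
     - Gam2 lam mu nu (comm a b) b) a.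
Proof.
move=> hl hm hn H Hp ha hb.
have i2 x y : im (Gam2 lam mu nu x y) by rewrite /im /Gam2 cdE.
rewrite (curv_L hl hm hn H Hp ha hb) hB_L.
move: (Hp); rewrite /S3 => ->; rewrite expr1n mul1r.
rewrite !Gam_Gam2 //; exact: im_comm.
Qed.

Arguments curv_L2 {lam mu nu nab p a b}.

Lemma KXY (lam mu nu : R) : lam != 0 -> mu != 0 -> nu != 0 ->
  Gf lam mu nu (Gam2 lam mu nu (lam^-1 *: e_i0 R) (Gam2 lam mu nu (mu^-1 *: e_0m1 R) (mu^-1 *: e_0m1 R))
     - Gam2 lam mu nu (mu^-1 *: e_0m1 R) (Gam2 lam mu nu (lam^-1 *: e_i0 R) (mu^-1 *: e_0m1 R))
     - Gam2 lam mu nu (comm (lam^-1 *: e_i0 R) (mu^-1 *: e_0m1 R)) (mu^-1 *: e_0m1 R)) (lam^-1 *: e_i0 R)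
  = ((lam ^+ 2 + mu ^+ 2 - nu ^+ 2) ^+ 2 + 4 * nu ^+ 2 * (mu ^+ 2 - nu ^+ 2))
        / (lam * mu * nu) ^+ 2.
Proof.
move=> hl hm hn.
rewrite /Gam2 /comm /Gf /qmul /e_i0 /e_0m1 !cdE.
by field; rewrite hl hm hn.
Qed.

Lemma KXZ (lam mu nu : R) : lam != 0 -> mu != 0 -> nu != 0 ->
  Gf lam mu nu (Gam2 lam mu nu (lam^-1 *: e_i0 R) (Gam2 lam mu nu (nu^-1 *: e_0i R) (nu^-1 *: e_0i R))
     - Gam2 lam mu nu (nu^-1 *: e_0i R) (Gam2 lam mu nu (lam^-1 *: e_i0 R) (nu^-1 *: e_0i R))
     - Gam2 lam mu nu (comm (lam^-1 *: e_i0 R) (nu^-1 *: e_0i R)) (nu^-1 *: e_0i R)) (lam^-1 *: e_i0 R)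
  = ((lam ^+ 2 - mu ^+ 2 + nu ^+ 2) ^+ 2 - 4 * mu ^+ 2 * (mu ^+ 2 - nu ^+ 2))
        / (lam * mu * nu) ^+ 2.
Proof.
move=> hl hm hn.
rewrite /Gam2 /comm /Gf /qmul /e_i0 /e_0i !cdE.
by field; rewrite hl hm hn.
Qed.

Lemma KYZ (lam mu nu : R) : lam != 0 -> mu != 0 -> nu != 0 ->
  Gf lam mu nu (Gam2 lam mu nu (mu^-1 *: e_0m1 R) (Gam2 lam mu nu (nu^-1 *: e_0i R) (nu^-1 *: e_0i R))
     - Gam2 lam mu nu (nu^-1 *: e_0i R) (Gam2 lam mu nu (mu^-1 *: e_0m1 R) (nu^-1 *: e_0i R))
     - Gam2 lam mu nu (comm (mu^-1 *: e_0m1 R) (nu^-1 *: e_0i R)) (nu^-1 *: e_0i R)) (mu^-1 *: e_0m1 R)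
  = ((lam ^+ 2 + mu ^+ 2 + nu ^+ 2) ^+ 2 + 2 * (lam ^+ 4 - mu ^+ 4 - nu ^+ 4))
        / (lam * mu * nu) ^+ 2.
Proof.
move=> hl hm hn.
rewrite /Gam2 /comm /Gf /qmul /e_0m1 /e_0i !cdE.
by field; rewrite hl hm hn.
Qed.
End A.


Theorem mainTheorem4 (R : realType) (lam mu nu : R)
  (nab : VF R -> VF R -> VF R) :
  0 < lam -> 0 < mu -> 0 < nu ->
  is_LeviCivita (hB lam mu nu) nab ->
  forall p : 'rV[R]_4, S3 p ->
    hB lam mu nu p (curv nab (Xf lam) (Yf mu) (Yf mu) p) (Xf lam p)
      = ((lam ^+ 2 + mu ^+ 2 - nu ^+ 2) ^+ 2 + 4 * nu ^+ 2 * (mu ^+ 2 - nu ^+ 2))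
        / (lam * mu * nu) ^+ 2 /\
    hB lam mu nu p (curv nab (Xf lam) (Zf nu) (Zf nu) p) (Xf lam p)
      = ((lam ^+ 2 - mu ^+ 2 + nu ^+ 2) ^+ 2 - 4 * mu ^+ 2 * (mu ^+ 2 - nu ^+ 2))
        / (lam * mu * nu) ^+ 2 /\
    hB lam mu nu p (curv nab (Yf mu) (Zf nu) (Zf nu) p) (Yf mu p)
      = ((lam ^+ 2 + mu ^+ 2 + nu ^+ 2) ^+ 2 + 2 * (lam ^+ 4 - mu ^+ 4 - nu ^+ 4))
        / (lam * mu * nu) ^+ 2.
Proof.
move=> hl hm hn H p Hp.
have hl' : lam != 0 by rewrite gt_eqF.
have hm' : mu != 0 by rewrite gt_eqF.
have hn' : nu != 0 by rewrite gt_eqF.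
have iX : im R (lam^-1 *: e_i0 R) by rewrite /im cdZ /e_i0 cd_mk40 mulr0.
have iY : im R (mu^-1 *: e_0m1 R) by rewrite /im cdZ /e_0m1 cd_mk40 mulr0.
have iZ : im R (nu^-1 *: e_0i R) by rewrite /im cdZ /e_0i cd_mk40 mulr0.
rewrite Xf_L Yf_L Zf_L.
split; [|split].
- by rewrite (curv_L2 _ _ _ _ _ _ _ _ hl' hm' hn' H Hp iX iY) KXY.
- by rewrite (curv_L2 _ _ _ _ _ _ _ _ hl' hm' hn' H Hp iX iZ) KXZ.
- by rewrite (curv_L2 _ _ _ _ _ _ _ _ hl' hm' hn' H Hp iY iZ) KYZ.
Qed.
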